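(* Let $\mathcal V$, $\mathbb B$, the stable orientation $\theta$ on smooth morphisms and the characteristic class $c\ell$ be as follows: $\mathcal V$ is the category of (quasi-projective) algebraic varieties over a field $k$ or of compact reduced complex analytic spaces (proper maps confined, all fiber squares independent); $\mathbb B$ is a bivariant theory on $\mathcal V$ in which each smooth $f:X\to Y$ has a stable orientation $\theta(f)\in\mathbb B(X\xrightarrow{f}Y)$; $c\ell$ assigns to each vector bundle $V$ on $X$ an element $c\ell(V)\in\mathbb B^*(X)$, contravariantly functorial, multiplicative on short exact sequences, with $c\ell(T_{pt})=1_{pt}$, and with $\theta(f)\bullet c\ell(V)=f^*c\ell(V)\bullet\theta(f)$ for smooth $f:X\to Y$, $V$ on $Y$. Put $\mathbb M_*(\mathcal V/X):=\mathbb M(\mathcal V/X\to pt)$ and $\mathbb B_*(X):=\mathbb B(X\to pt)$, both covariant for proper morphisms via bivariant pushforward. Then there is a unique natural transformation ${\gamma_{c\ell}}_*:\mathbb M_*(\mathcal V/-)\to\mathbb B_*(-)$ (of functors covariant for proper morphisms) such that for every smooth variety $X$, $${\gamma_{c\ell}}_*([X\xrightarrow{\mathrm{id}_X}X])=c\ell(TX)\cap[X],$$ where $[X]:=\theta(p)\in\mathbb B_*(X)$ for the smooth constant map $p:X\to pt$ and $\cap$ denotes the bivariant product $\mathbb B^*(X)\otimes\mathbb B_*(X)\to\mathbb B_*(X)$.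
   Context: $\mathbb M(\mathcal V/X\xrightarrow{f}Y)$ is the free abelian group on isomorphism classes $[V\xrightarrow{h}X]$ of proper morphisms $h$ with $f\circ h$ smooth; so $\mathbb M_*(\mathcal V/X)$ is free on classes $[V\xrightarrow{h}X]$ with $h$ proper and $V$ smooth, and for proper $g:X\to X'$, $g_*[V\xrightarrow{h}X]=[V\xrightarrow{g\circ h}X']$. $\mathbb B^*(X):=\mathbb B(X\xrightarrow{\mathrm{id}_X}X)$. A stable orientation satisfies $\theta(g\circ f)=\theta(f)\bullet\theta(g)$, $\theta(\mathrm{id})=1$, and $\theta(f')=g^*\theta(f)$ under base change. *)

(* Defs.v *)
From HB Require Import structures.
From mathcomp Require Import all_boot all_algebra.
From mathcomp Require Import boolp.
From mathcomp Require Import freeg.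

Set Implicit Arguments.
Unset Strict Implicit.
Unset Printing Implicit Defensive.

Import GRing.Theory.
Local Open Scope ring_scope.

Definition tr {A : Type} {P : A -> Type} {x y : A} (e : x = y) (p : P x) : P y :=
  eq_rect x P p y e.

Record Cat := {
  Ob : Type;
  Hom : Ob -> Ob -> Type;
  idm : forall X, Hom X X;
  cmp : forall X Y Z, Hom Y Z -> Hom X Y -> Hom X Z;
  cmp_idl : forall X Y (f : Hom X Y), cmp (idm Y) f = f;
  cmp_idr : forall X Y (f : Hom X Y), cmp f (idm X) = f;
  cmp_assoc : forall X Y Z W (f : Hom X Y) (g : Hom Y Z) (h : Hom Z W),
      cmp h (cmp g f) = cmp (cmp h g) f;
  pt : Ob;
  to_pt : forall X, Hom X pt;
  to_pt_uniq : forall X (f : Hom X pt), f = to_pt X;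
  proper : forall X Y, Hom X Y -> Prop;
  smooth : forall X Y, Hom X Y -> Prop;
  proper_id : forall X, proper (idm X);
  proper_cmp : forall X Y Z (f : Hom X Y) (g : Hom Y Z),
      proper f -> proper g -> proper (cmp g f);
  smooth_id : forall X, smooth (idm X);
  smooth_cmp : forall X Y Z (f : Hom X Y) (g : Hom Y Z),
      smooth f -> smooth g -> smooth (cmp g f);
  Bun : Ob -> Type;
  bpull : forall X Y, Hom X Y -> Bun Y -> Bun X;
  bpull_id : forall X (V : Bun X), bpull (idm X) V = V;
  bpull_cmp : forall X Y Z (f : Hom X Y) (g : Hom Y Z) (V : Bun Z),
      bpull (cmp g f) V = bpull f (bpull g V);
  ses : forall X, Bun X -> Bun X -> Bun X -> Prop;      (* 0 -> V' -> V -> V'' -> 0 *)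
  tangent : forall X, Bun X;                              (* T X (for smooth X) *)
  iso_proper : forall X Y (u : Hom X Y) (v : Hom Y X),
      cmp v u = idm X -> cmp u v = idm Y -> proper u;
  iso_smooth : forall X Y (u : Hom X Y) (v : Hom Y X),
      cmp v u = idm X -> cmp u v = idm Y -> smooth u;
  iso_tangent : forall X Y (u : Hom X Y) (v : Hom Y X),
      cmp v u = idm X -> cmp u v = idm Y -> tangent X = bpull u (tangent Y)
}.

Arguments idm {C} X : rename.
Arguments cmp {C X Y Z} : rename.
Arguments pt {C} : rename.
Arguments to_pt {C} X : rename.
Arguments proper {C X Y} : rename.
Arguments smooth {C X Y} : rename.
Arguments bpull {C X Y} : rename.
Arguments ses {C X} : rename.
Arguments tangent {C} X : rename.

Record Biv (C : Cat) := {
  B : forall X Y : Ob C, Hom X Y -> zmodType;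
  bprod : forall X Y Z (f : Hom X Y) (g : Hom Y Z), B f -> B g -> B (cmp g f);
  bprodDl : forall X Y Z (f : Hom X Y) (g : Hom Y Z) (a a' : B f) (b : B g),
      bprod (a + a') b = bprod a b + bprod a' b;
  bprodDr : forall X Y Z (f : Hom X Y) (g : Hom Y Z) (a : B f) (b b' : B g),
      bprod a (b + b') = bprod a b + bprod a b';
  bprodA : forall X Y Z W (f : Hom X Y) (g : Hom Y Z) (h : Hom Z W)
      (a : B f) (b : B g) (c : B h),
      @tr _ (fun k : Hom X W => B k) _ _ (esym (cmp_assoc f g h)) (bprod a (bprod b c)) = bprod (bprod a b) c;
  bone : forall X, B (idm X);
  bone_l : forall X Y (f : Hom X Y) (a : B f), @tr _ (fun k : Hom X Y => B k) _ _ (cmp_idr f) (bprod (bone X) a) = a;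
  bone_r : forall X Y (f : Hom X Y) (a : B f), @tr _ (fun k : Hom X Y => B k) _ _ (cmp_idl f) (bprod a (bone Y)) = a;
  bpush : forall X Y Z (f : Hom X Y) (g : Hom Y Z), proper f -> B (cmp g f) -> B g;
  bpushD : forall X Y Z (f : Hom X Y) (g : Hom Y Z) (pf : proper f) (a a' : B (cmp g f)),
      bpush pf (a + a') = bpush pf a + bpush pf a';
  bpush_cmp : forall X Y Z W (f : Hom X Y) (g : Hom Y Z) (h : Hom Z W)
      (pf : proper f) (pg : proper g) (a : B (cmp h (cmp g f))),
      @bpush X Z W (cmp g f) h (proper_cmp pf pg) a
      = @bpush Y Z W g h pg (@bpush X Y W f (cmp h g) pf (@tr _ (fun k : Hom X W => B k) _ _ (cmp_assoc f g h) a));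
  bpush_prod : forall X X' Y Z (f : Hom X X') (g : Hom X' Y) (h : Hom Y Z)
      (pf : proper f) (a : B (cmp g f)) (b : B h),
      @bpush X X' Z f (cmp h g) pf
        (@tr _ (fun k : Hom X Z => B k) _ _ (cmp_assoc f g h) (bprod a b))
      = bprod (@bpush X X' Y f g pf a) b;
  bpullstar : forall X Y (f : Hom X Y), B (idm Y) -> B (idm X);
  bpullstar_id : forall X (a : B (idm X)), bpullstar (idm X) a = a;
  bpullstar_cmp : forall X Y Z (f : Hom X Y) (g : Hom Y Z) (a : B (idm Z)),
      bpullstar (cmp g f) a = bpullstar f (bpullstar g a)
}.

Arguments B {C} b {X Y} : rename.
Arguments bprod {C} b {X Y Z f g} : rename.
Arguments bone {C} b X : rename.
Arguments bpush {C} b {X Y Z f} g : rename.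
Arguments bpullstar {C} b {X Y} : rename.

Definition trB {C} (b : Biv C) {X Y : Ob C} {f f' : Hom X Y} (e : f = f')
  (x : B b f) : B b f' := @tr _ (fun k => B b k) _ _ e x.
Arguments trB {C} b {X Y f f'} e x.

Definition Bup {C} (b : Biv C) (X : Ob C) := B b (idm X).
Definition Blow {C} (b : Biv C) (X : Ob C) := B b (to_pt X).

(* covariant pushforward g_* : B_*(X) -> B_*(X') for proper g : X -> X'
   (bivariant pushforward, B(X -> pt) = B(X -(p_X' o g)-> pt) -> B(X' -> pt)) *)
Definition Blow_push {C} (b : Biv C) (X X' : Ob C) (g : Hom X X') (pg : proper g)
  (a : Blow b X) : Blow b X' :=
  bpush b (to_pt X') pg (trB b (esym (to_pt_uniq (cmp (to_pt X') g))) a).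

Definition bcap {C} (b : Biv C) (X : Ob C) (a : Bup b X) (m : Blow b X) : Blow b X :=
  trB b (cmp_idr (to_pt X)) (bprod b a m).

Record Orient (C : Cat) (b : Biv C) := {
  theta : forall X Y (f : Hom X Y), smooth f -> B b f;
  theta_cmp : forall X Y Z (f : Hom X Y) (g : Hom Y Z)
      (sf : smooth f) (sg : smooth g) (sgf : smooth (cmp g f)),
      theta sgf = bprod b (theta sf) (theta sg);
  theta_id : forall X (s : smooth (idm X)), theta s = bone b X;
  theta_iso : forall X Y (u : Hom X Y) (v : Hom Y X) (su : smooth u) (pu : proper u),
      cmp v u = idm X -> cmp u v = idm Y ->
      bpush b (idm Y) pu (trB b (esym (cmp_idl u)) (theta su)) = bone b Y
}.

Arguments theta {C b} o {X Y f} : rename.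

Definition fund {C} {b : Biv C} (o : Orient b) (X : Ob C) (sX : smooth (to_pt X))
  : Blow b X := theta o sX.

Record CharCl (C : Cat) (b : Biv C) (o : Orient b) := {
  cl : forall X, Bun X -> Bup b X;
  cl_pull : forall X Y (f : Hom X Y) (V : Bun Y),
      cl (bpull f V) = bpullstar b f (cl V);
  cl_ses : forall X (V' V V'' : Bun X), ses V' V V'' ->
      cl V = trB b (cmp_idl (idm X)) (bprod b (cl V') (cl V''));
  cl_pt : cl (tangent (@pt C)) = bone b pt;
  cl_theta : forall X Y (f : Hom X Y) (sf : smooth f) (V : Bun Y),
      trB b (cmp_idl f) (bprod b (theta o sf) (cl V))
      = trB b (cmp_idr f) (bprod b (bpullstar b f (cl V)) (theta o sf))
}.

Arguments cl {C b o} c {X} : rename.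

Definition Gen (C : Cat) (X : Ob C) : Type :=
  {V : Ob C & {h : Hom V X | proper h /\ smooth (to_pt V)}}.

Definition gen_iso (C : Cat) (X : Ob C) (g1 g2 : Gen X) : Prop :=
  exists (u : Hom (projT1 g1) (projT1 g2)) (v : Hom (projT1 g2) (projT1 g1)),
    [/\ cmp v u = idm _, cmp u v = idm _ &
        cmp (proj1_sig (projT2 g2)) u = proj1_sig (projT2 g1)].

Definition IsoCl (C : Cat) (X : Ob C) : Type :=
  {classic {P : Gen X -> Prop | exists g, P = gen_iso g}}.

Definition cls (C : Cat) (X : Ob C) (g : Gen X) : IsoCl X :=
  exist (fun P => exists g, P = gen_iso g) (gen_iso g) (ex_intro _ g erefl).

Definition rep (C : Cat) (X : Ob C) (c : IsoCl X) : Gen X :=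
  projT1 (cid (proj2_sig c)).

Definition M (C : Cat) (X : Ob C) : zmodType := {freeg (IsoCl X) / int}.

Definition mgen (C : Cat) (X V : Ob C) (h : Hom V X) (ph : proper h)
  (sV : smooth (to_pt V)) : M X :=
  << cls (existT _ V (exist _ h (conj ph sV)) : Gen X) >>.

Definition gen_push (C : Cat) (X X' : Ob C) (g : Hom X X') (pg : proper g)
  (x : Gen X) : Gen X' :=
  let: existT V (exist h (conj ph sV)) := x in
  existT _ V (exist _ (cmp g h) (conj (proper_cmp ph pg) sV)).

Definition M_push (C : Cat) (X X' : Ob C) (g : Hom X X') (pg : proper g)
  (m : M X) : M X' :=
  fglift (fun c : IsoCl X => (<< cls (gen_push pg (rep c)) >> : {freeg (IsoCl X') / int})) m.

Definition natural (C : Cat) (b : Biv C)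
  (gam : forall X : Ob C, {additive M X -> Blow b X}) : Prop :=
  forall (X X' : Ob C) (g : Hom X X') (pg : proper g) (m : M X),
    gam X' (M_push pg m) = Blow_push pg (gam X m).

Definition normalized (C : Cat) (b : Biv C) (o : Orient b) (c : CharCl o)
  (gam : forall X : Ob C, {additive M X -> Blow b X}) : Prop :=
  forall (X : Ob C) (sX : smooth (to_pt X)),
    gam X (mgen (proper_id X) sX) = bcap (cl c (tangent X)) (fund o sX).

(* Main.v *)
Require Import Defs.
From HB Require Import structures.
From mathcomp Require Import all_boot all_algebra.
From mathcomp Require Import boolp freeg.
From Stdlib Require Import ProofIrrelevance.
Import Defs.

Set Implicit Arguments.
Unset Strict Implicit.
Unset Printing Implicit Defensive.
Import GRing.Theory.
Local Open Scope ring_scope.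

Definition heq (C : Cat) (b : Biv C) (X Y : Ob C) (f f' : Hom X Y)
  (x : B b f) (y : B b f') : Prop := exists e : f = f', trB b e x = y.

Lemma heq_eq C (b : Biv C) X Y (f : Hom X Y) (x y : B b f) : heq x y -> x = y.
Proof. case=> e <-; by rewrite (proof_irrelevance _ e erefl). Qed.

Lemma heq_refl C (b : Biv C) X Y (f : Hom X Y) (x : B b f) : heq x x.
Proof. by exists erefl. Qed.

Lemma heq_sym C (b : Biv C) X Y (f f' : Hom X Y) (x : B b f) (y : B b f') :
  heq x y -> heq y x.
Proof. by case=> e; case: f' / e y => y <-; exists erefl. Qed.

Lemma heq_trans C (b : Biv C) X Y (f f' f'' : Hom X Y) (x : B b f) (y : B b f')
  (z : B b f'') : heq x y -> heq y z -> heq x z.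
Proof. case=> e; case: f' / e y => y <-; case=> e'; case: f'' / e' z => z <-; by exists erefl. Qed.

Lemma heq_tr C (b : Biv C) X Y (f f' : Hom X Y) (e : f = f') (x : B b f) :
  heq (trB b e x) x.
Proof. by apply: heq_sym; exists e. Qed.

Lemma heq_trr C (b : Biv C) X Y (f f' : Hom X Y) (e : f = f') (x : B b f) :
  heq x (trB b e x).
Proof. by exists e. Qed.

Lemma heq_prod C (b : Biv C) X Y Z (f f' : Hom X Y) (g g' : Hom Y Z)
  (a : B b f) (a' : B b f') (c : B b g) (c' : B b g') :
  heq a a' -> heq c c' -> heq (bprod b a c) (bprod b a' c').
Proof. case=> e; case: f' / e a' => a' <-; case=> e; case: g' / e c' => c' <-; by exists erefl. Qed.

Lemma heq_push C (b : Biv C) X Y Z (f : Hom X Y) (g g' : Hom Y Z) (pf : proper f)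
  (x : B b (cmp g f)) (y : B b (cmp g' f)) :
  g = g' -> heq x y -> heq (bpush b g pf x) (bpush b g' pf y).
Proof. move=> e; case: g' / e y => y /heq_eq ->; exact: heq_refl. Qed.

Lemma heq_A C (b : Biv C) X Y Z W (f : Hom X Y) (g : Hom Y Z) (h : Hom Z W)
  (a : B b f) (c : B b g) (d : B b h) :
  heq (bprod b a (bprod b c d)) (bprod b (bprod b a c) d).
Proof. rewrite -bprodA; exact: heq_trr. Qed.

Lemma heq_onel C (b : Biv C) X Y (f : Hom X Y) (a : B b f) :
  heq (bprod b (bone b X) a) a.
Proof. rewrite -[in T in heq _ T](bone_l a); exact: heq_trr. Qed.

Lemma heq_theta C (b : Biv C) (o : Orient b) X Y (f f' : Hom X Y)
  (sf : smooth f) (sf' : smooth f') : f = f' -> heq (theta o sf) (theta o sf').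
Proof. move=> e; case: f' / e sf'=> sf'; rewrite (proof_irrelevance _ sf sf'); exact: heq_refl. Qed.

Lemma heq_cl_theta C (b : Biv C) (o : Orient b) (c : CharCl o) X Y (f : Hom X Y)
  (sf : smooth f) (V : Bun Y) :
  heq (bprod b (theta o sf) (cl c V)) (bprod b (bpullstar b f (cl c V)) (theta o sf)).
Proof.
apply: heq_trans (heq_trr (cmp_idl f) _) _.
rewrite cl_theta; exact: heq_tr.
Qed.

Lemma iso_key C (b : Biv C) (o : Orient b) (c : CharCl o) V1 V2
  (u : Hom V1 V2) (v : Hom V2 V1) (vu : cmp v u = idm V1) (uv : cmp u v = idm V2)
  (pu : proper u) (s1 : smooth (to_pt V1)) (s2 : smooth (to_pt V2)) :
  Blow_push pu (bcap (cl c (tangent V1)) (fund o s1))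
  = bcap (cl c (tangent V2)) (fund o s2).
Proof.
have su : smooth u := iso_smooth vu uv.
have sgf : smooth (cmp (to_pt V2) u) := smooth_cmp su s2.
rewrite (iso_tangent vu uv) cl_pull.
apply: heq_eq.
rewrite /Blow_push /bcap /fund.
set P := cl c (tangent V2).
set a := trB b (esym (cmp_idl u)) (theta o su).
have e2 : to_pt V2 = cmp (to_pt V2) (idm V2) by rewrite cmp_idr.
apply: (@heq_trans _ _ _ _ _ _ _ _
   (bpush b (cmp (to_pt V2) (idm V2)) pu
      (trB b (cmp_assoc u (idm V2) (to_pt V2)) (bprod b a (trB b (cmp_idr (to_pt V2)) (bprod b P (theta o s2))))))).
  apply: heq_push => //.
  apply: heq_trans (heq_tr _ _) _.
  apply: heq_trans (heq_tr _ _) _.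
  apply: heq_sym; apply: heq_trans (heq_tr _ _) _.
  apply: (@heq_trans _ _ _ _ _ _ _ _ (bprod b (theta o su) (bprod b P (theta o s2)))).
    apply: heq_prod; [exact: heq_tr| exact: heq_tr].
  apply: heq_trans (heq_A _ _ _) _.
  apply: heq_trans (heq_prod (heq_cl_theta c su (tangent V2)) (heq_refl _)) _.
  apply: heq_trans (heq_sym (heq_A _ _ _)) _.
  apply: heq_prod; first exact: heq_refl.
  apply: heq_sym; apply: heq_trans (heq_theta o s1 sgf (esym (to_pt_uniq _))) _.
  rewrite (theta_cmp o su s2 sgf); exact: heq_refl.
rewrite bpush_prod /a (theta_iso o su pu vu uv).
apply: heq_trans (heq_onel _) _.
exact: heq_refl.
Qed.

Lemma sig_eqP (A : Type) (P : A -> Prop) (x y : A) (px : P x) (py : P y) :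
  x = y -> exist P x px = exist P y py.
Proof. move=> e; subst y; by rewrite (proof_irrelevance _ px py). Qed.

Lemma Blow_push_cmp C (b : Biv C) X Y Z (f : Hom X Y) (g : Hom Y Z)
  (pf : proper f) (pg : proper g) (x : Blow b X) :
  Blow_push (proper_cmp pf pg) x = Blow_push pg (Blow_push pf x).
Proof.
apply: heq_eq; rewrite /Blow_push bpush_cmp.
apply: heq_push => //.
apply: heq_trans _ (heq_trr _ _).
apply: heq_push; first exact: to_pt_uniq.
apply: heq_trans (heq_tr _ _) _.
apply: heq_trans (heq_tr _ _) _.
exact: heq_trr.
Qed.

Definition valG C (b : Biv C) (o : Orient b) (c : CharCl o) X (g : Gen X) : Blow b X :=
  Blow_push (proj1 (proj2_sig (projT2 g)))
    (bcap (cl c (tangent (projT1 g))) (fund o (proj2 (proj2_sig (projT2 g))))).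

Lemma gen_iso_refl C X (g : Gen X) : @gen_iso C X g g.
Proof. exists (idm _), (idm _); split; by rewrite ?cmp_idl ?cmp_idr. Qed.

Lemma gen_iso_sym C X (g1 g2 : Gen X) : @gen_iso C X g1 g2 -> gen_iso g2 g1.
Proof.
case=> u [v [vu uv e]]; exists v, u; split=> //.
by rewrite -e -cmp_assoc uv cmp_idr.
Qed.

Lemma gen_iso_trans C X (g1 g2 g3 : Gen X) :
  @gen_iso C X g1 g2 -> gen_iso g2 g3 -> gen_iso g1 g3.
Proof.
case=> u [v [vu uv e]]; case=> u' [v' [vu' uv' e']].
exists (cmp u' u), (cmp v v'); split.
- by rewrite cmp_assoc -(cmp_assoc u' v' v) vu' cmp_idr.
- by rewrite cmp_assoc -(cmp_assoc v u u') uv cmp_idr.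
- by rewrite cmp_assoc e'.
Qed.

Lemma cls_iso C X (g1 g2 : Gen X) : @gen_iso C X g1 g2 -> cls g1 = cls g2.
Proof.
move=> h.
have E : gen_iso g1 = gen_iso g2.
  apply: funext => g; apply: propext; split => H.
  - exact: gen_iso_trans (gen_iso_sym h) H.
  - exact: gen_iso_trans h H.
exact: sig_eqP E.
Qed.

Lemma rep_spec C X (c : IsoCl X) : proj1_sig c = gen_iso (@rep C X c).
Proof. rewrite /rep; case: (cid _) => /= g; done. Qed.

Lemma cls_rep C X (c : IsoCl X) : cls (@rep C X c) = c.
Proof.
case: c (rep_spec c) => P p /= E; exact: sig_eqP.
Qed.

Lemma rep_cls C X (g : Gen X) : gen_iso g (rep (@cls C X g)).
Proof. have := rep_spec (cls g) => /= ->; exact: gen_iso_refl. Qed.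

Lemma valG_iso C (b : Biv C) (o : Orient b) (c : CharCl o) X (g1 g2 : Gen X) :
  gen_iso g1 g2 -> valG c g1 = valG c g2.
Proof.
case: g1 => V1 [h1 [ph1 s1]]; case: g2 => V2 [h2 [ph2 s2]].
case=> /= u [v [vu uv e]]; rewrite /valG; cbn -[Blow_push bcap fund cl].
subst h1.
have pu : proper u := iso_proper vu uv.
rewrite (proof_irrelevance _ (proj1 (conj ph1 s1)) (proper_cmp pu ph2)) Blow_push_cmp.
rewrite (iso_key c vu uv).
by rewrite (proof_irrelevance _ (proj1 (conj ph2 s2)) ph2) (proof_irrelevance _ (proj2 (conj ph2 s2)) s2).
Qed.

Lemma valG_rep C (b : Biv C) (o : Orient b) (c : CharCl o) X (g : Gen X) :
  valG c (rep (cls g)) = valG c g.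
Proof. by apply/esym/valG_iso/rep_cls. Qed.

Lemma gen_push_iso C X X' (g : Hom X X') (pg : proper g) (g1 g2 : Gen X) :
  @gen_iso C X g1 g2 -> gen_iso (gen_push pg g1) (gen_push pg g2).
Proof.
case: g1 => V1 [h1 [ph1 s1]]; case: g2 => V2 [h2 [ph2 s2]].
case=> /= u [v [vu uv e]]; exists u, v; split=> //=.
by rewrite -cmp_assoc e.
Qed.

Lemma valG_push C (b : Biv C) (o : Orient b) (c : CharCl o) X X' (g : Hom X X')
  (pg : proper g) (x : Gen X) :
  valG c (gen_push pg x) = Blow_push pg (valG c x).
Proof.
case: x => V [h [ph s]]; rewrite /valG /=.
rewrite (proof_irrelevance _ (proj1 (conj (proper_cmp ph pg) s)) (proper_cmp ph pg)).
by rewrite Blow_push_cmp (proof_irrelevance _ (proj1 (conj ph s)) ph) (proof_irrelevance _ (proj2 (conj ph s)) s) (proof_irrelevance _ (proj2 (conj (proper_cmp ph pg) s)) s).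
Qed.

Lemma addB_of_D (U V : zmodType) (f : U -> V) :
  (forall x y, f (x + y) = f x + f y) -> forall x y, f (x - y) = f x - f y.
Proof.
move=> fD.
have f0 : f 0 = 0.
  have E := fD 0 0; rewrite addr0 in E.
  by apply: (addrI (f 0)); rewrite addr0 -E.
have fN : forall y, f (- y) = - f y.
  by move=> y; apply/eqP; rewrite -subr_eq0 opprK -fD addNr f0.
by move=> x y; rewrite fD fN.
Qed.

Lemma fB_props (U V : zmodType) (f : U -> V) :
  (forall x y, f (x - y) = f x - f y) ->
  [/\ f 0 = 0, forall x y, f (x + y) = f x + f y & forall x (z : int), f (x *~ z) = f x *~ z].
Proof.
move=> hB.
have h0 : f 0 = 0 by rewrite -(subrr 0) hB subrr.
have hN : forall y, f (- y) = - f y by move=> y; rewrite -sub0r hB h0 sub0r.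
have hD : forall x y, f (x + y) = f x + f y.
  by move=> x y; rewrite -{1}[y]opprK hB hN opprK.
have hMn : forall x n, f (x *+ n) = f x *+ n.
  move=> x; elim=> [|n IH]; first by rewrite !mulr0n h0.
  by rewrite !mulrS hD IH.
split=> // x [n|n]; first exact: hMn.
by rewrite !NegzE !mulrNz hN hMn.
Qed.

Lemma ext_gen (K : choiceType) (V : zmodType) (f1 f2 : {freeg K / int} -> V) :
  (forall x y, f1 (x - y) = f1 x - f1 y) -> (forall x y, f2 (x - y) = f2 x - f2 y) ->
  (forall k, f1 << k >> = f2 << k >>) -> forall m, f1 m = f2 m.
Proof.
move=> /fB_props [a0 aD aM] /fB_props [b0 bD bM] hk.
elim/freeg_ind_dom0 => [|z x D _ _ IH]; first by rewrite a0 b0.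
by rewrite aD bD IH -[z]intz -freegU_mulz aM bM hk.
Qed.

Definition gamF C (b : Biv C) (o : Orient b) (c : CharCl o) X (k : IsoCl X)
  : zmodule (Blow b X) := valG c (rep k).

Definition gamf C (b : Biv C) (o : Orient b) (c : CharCl o) X (m : M X) : Blow b X :=
  fglift (gamF c (X:=X)) m.

Lemma gamf_is_additive C (b : Biv C) (o : Orient b) (c : CharCl o) X :
  GRing.zmod_morphism (@gamf C b o c X).
Proof. exact: (lift_is_additive (gamF c (X:=X))). Qed.

HB.instance Definition _ C (b : Biv C) (o : Orient b) (c : CharCl o) X :=
  GRing.isZmodMorphism.Build (M X) (Blow b X) (@gamf C b o c X) (@gamf_is_additive C b o c X).

Lemma gamf_gen C (b : Biv C) (o : Orient b) (c : CharCl o) X (k : IsoCl X) :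
  gamf c << k >> = valG c (rep k).
Proof. by rewrite /gamf liftU scale1r. Qed.

Lemma M_push_gen C X X' (g : Hom X X') (pg : proper g) (k : @IsoCl C X) :
  M_push pg << k >> = << cls (gen_push pg (rep k)) >>.
Proof. by rewrite /M_push liftU scale1r. Qed.

Lemma Blow_pushD C (b : Biv C) X X' (g : Hom X X') (pg : proper g) (x y : Blow b X) :
  Blow_push pg (x + y) = Blow_push pg x + Blow_push pg y.
Proof.
rewrite /Blow_push -bpushD; congr (bpush _ _ _ _).
by move: (esym _); case: _ / .
Qed.

Lemma gam_unique C (b : Biv C) (o : Orient b) (c : CharCl o)
  (gam' : forall X : Ob C, {additive M X -> Blow b X}) :
  natural gam' -> normalized c gam' ->
  forall (X : Ob C) (k : IsoCl X), gam' X << k >> = valG c (rep k).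
Proof.
move=> nat' nor' X k.
rewrite -{1}(cls_rep k); move: (rep k) => g.
case: g => V [h [ph sV]].
set g := existT _ V _.
set g0 := (existT _ V (exist _ (idm V) (conj (proper_id V) sV)) : Gen V).
have -> : << cls g >> = M_push ph (mgen (proper_id V) sV).
  rewrite /mgen M_push_gen; congr << _ >>.
  apply/esym/cls_iso; apply: gen_iso_trans (gen_push_iso ph (gen_iso_sym (rep_cls g0))) _.
  by exists (idm V), (idm V); split; rewrite /= ?cmp_idl.
rewrite nat' nor' /valG /=.
by rewrite (proof_irrelevance _ (proj1 (conj ph sV)) ph) (proof_irrelevance _ (proj2 (conj ph sV)) sV).
Qed.

Unset Implicit Arguments.
Local Close Scope ring_scope.

Theorem corollary1p5 (C : Cat) (b : Biv C) (o : Orient b) (c : CharCl o) :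
  exists gam : forall X : Ob C, {additive M X -> Blow b X},
    [/\ natural gam, normalized c gam &
        forall gam' : forall X : Ob C, {additive M X -> Blow b X},
          natural gam' -> normalized c gam' ->
          forall (X : Ob C) (m : M X), gam' X m = gam X m].
Proof.
exists (fun X => (@gamf C b o c X : {additive M X -> Blow b X})); split.
- move=> X X' g pg m /=.
  apply: (ext_gen (f1 := fun m => gamf c (M_push pg m)) (f2 := fun m => Blow_push pg (gamf c m))).
  + move=> x y /=.
    have hM : forall x y, (M_push pg (x - y) = M_push pg x - M_push pg y)%R.
      exact: lift_is_additive.
    by rewrite hM (@gamf_is_additive C b o c X').
  + move=> x y /=; rewrite (@gamf_is_additive C b o c X); apply: addB_of_D => u w; exact: Blow_pushD.
  + move=> k /=; rewrite M_push_gen !gamf_gen valG_rep; exact: valG_push.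
- move=> X sX /=; rewrite /mgen gamf_gen valG_rep /valG /=.
  have e : cmp (idm X) (idm X) = idm X := cmp_idl _.
  rewrite (proof_irrelevance _ (proj2 (conj (proper_id X) sX)) sX).
  exact: (iso_key c e e).
- move=> gam' nat' nor' X.
  apply: ext_gen; [exact: raddfB | exact: raddfB |].
  by move=> k; rewrite (gam_unique nat' nor') /= gamf_gen.
Qed.
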